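(* In $NOM$, if a sequent $\Gamma\vdash\phi$ is derivable, then for every finite sequence of formulas $\Delta$, the sequent $\Delta,\Gamma\vdash\phi$ is also derivable.
   Context: The propositional deductive system $NOM$: formulas are built from propositional letters using $\wedge$, $\rightarrow$, $\neg$. Sequents are $\phi_1,\ldots,\phi_n\vdash\psi$ ($n\ge0$) with antecedent a finite ordered sequence; commas denote concatenation. With $\Gamma$ a finite possibly empty sequence of formulas and $\phi,\psi,\chi$ formulas, the rules of $NOM$ are: (assumption) $\Gamma,\phi\vdash\phi$; (cut) $\Gamma\vdash\phi$, $\Gamma,\phi\vdash\psi$ $\Rightarrow$ $\Gamma\vdash\psi$; (paste) $\Gamma\vdash\phi$, $\Gamma\vdash\psi$ $\Rightarrow$ $\Gamma,\phi\vdash\psi$; (compatible exchange) $\Gamma,\phi,\psi\vdash\phi$, $\Gamma,\phi,\psi\vdash\chi$, $\Gamma,\psi,\phi\vdash\psi$ $\Rightarrow$ $\Gamma,\psi,\phi\vdash\chi$; ($\wedge$-intro) $\Gamma\vdash\phi$, $\Gamma\vdash\psi$ $\Rightarrow$ $\Gamma\vdash\phi\wedge\psi$; ($\wedge$-elim) $\Gamma\vdash\phi\wedge\psi$ $\Rightarrow$ $\Gamma\vdash\phi$ and $\Rightarrow$ $\Gamma\vdash\psi$; ($\rightarrow$-intro) $\Gamma,\phi\vdash\psi$ $\Rightarrow$ $\Gamma\vdash\phi\rightarrow\psi$; ($\rightarrow$-elim) $\Gamma\vdash\phi\rightarrow\psi$ $\Rightarrow$ $\Gamma,\phi\vdash\psi$;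 (excluded middle) $\Gamma,\phi\vdash\psi$, $\Gamma,\neg\phi\vdash\psi$ $\Rightarrow$ $\Gamma\vdash\psi$; (explosion) $\Gamma\vdash\neg\phi$ $\Rightarrow$ $\Gamma,\phi\vdash\psi$. *)

(* Defs.v *)
From Stdlib Require Import List.
Import ListNotations.

Inductive formula : Type :=
| Var : nat -> formula
| And : formula -> formula -> formula
| Imp : formula -> formula -> formula
| Neg : formula -> formula.

(* A sequent Gamma |- phi; the antecedent is an ordered finite list,
   and "Gamma, phi" is Gamma ++ [phi]. *)
Inductive NOM : list formula -> formula -> Prop :=
| nom_assumption : forall G p, NOM (G ++ [p]) p
| nom_cut : forall G p q, NOM G p -> NOM (G ++ [p]) q -> NOM G q
| nom_paste : forall G p q, NOM G p -> NOM G q -> NOM (G ++ [p]) q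
| nom_exchange : forall G p q r,
    NOM (G ++ [p; q]) p -> NOM (G ++ [p; q]) r -> NOM (G ++ [q; p]) q ->
    NOM (G ++ [q; p]) r
| nom_and_intro : forall G p q, NOM G p -> NOM G q -> NOM G (And p q)
| nom_and_elim_l : forall G p q, NOM G (And p q) -> NOM G p
| nom_and_elim_r : forall G p q, NOM G (And p q) -> NOM G q
| nom_imp_intro : forall G p q, NOM (G ++ [p]) q -> NOM G (Imp p q)
| nom_imp_elim : forall G p q, NOM G (Imp p q) -> NOM (G ++ [p]) q
| nom_em : forall G p q, NOM (G ++ [p]) q -> NOM (G ++ [Neg p]) q -> NOM G q
| nom_explosion : forall G p q, NOM G (Neg p) -> NOM (G ++ [p]) q.

(* Main.v *)
Require Import Defs.
From Stdlib Require Import List.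
Import ListNotations.

Theorem proposition3p1 :
  forall (Gamma : list formula) (phi : formula),
    NOM Gamma phi -> forall Delta : list formula, NOM (Delta ++ Gamma) phi.
Proof.
  intros Gamma phi H; induction H; intros Delta; repeat rewrite app_assoc.
  - apply nom_assumption.
  - eapply nom_cut; [apply IHNOM1|]. rewrite <- app_assoc; apply IHNOM2.
  - apply nom_paste; auto.
  - apply nom_exchange; rewrite <- app_assoc; auto.
  - apply nom_and_intro; auto.
  - eapply nom_and_elim_l; eauto.
  - eapply nom_and_elim_r; eauto.
  - apply nom_imp_intro; rewrite <- app_assoc; auto.
  - apply nom_imp_elim; auto.
  - eapply nom_em; rewrite <- app_assoc; auto.
  - eapply nom_explosion; eauto.
Qed.
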